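(* Let $\{M_i\mid i\in I\}$ be a collection of monoids. Then the monoid free product $F=\prod_1^{*}\{M_i\mid i\in I\}$ is weakly right coherent if and only if each $M_i$ ($i\in I$) is weakly right coherent.
   Context: A monoid $M$ is weakly right coherent (WRC) if every finitely generated right ideal of $M$ is finitely presented as a right $M$-act. (It is known that a monoid is WRC iff it is right ideal Howson — the intersection of any two finitely generated right ideals is finitely generated — and finitely right equated — every right annihilator congruence $\mathbf{r}_M(a)=\{(s,t)\mid as=at\}$ is finitely generated as a right congruence.) For pairwise disjoint semigroups $S_i$, the semigroup free product $\prod^{*}\{S_i\mid i\in I\}$ consists of sequences $s_1*\dots*s_n$ with $s_j\in\bigsqcup S_i$ and consecutive entries from different $S_i$, multiplied by concatenation, multiplying the two adjacent entries if they lie in the same $S_i$. If each $M_i$ is a monoid with identity $1_i$, the monoid free product $\prod_1^{*}\{M_i\mid i\in I\}$ is the quotient of the semigroup free product by the congruence generated by $\{(1_i,1_j)\mid i,j\in I\}$. *)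

(* Defs.v *)
From Stdlib Require Import List ClassicalEpsilon Fin.
Import ListNotations.
Set Implicit Arguments.

Record RawMonoid := { rcar : Type; rop : rcar -> rcar -> rcar; rone : rcar }.

Record Monoid := {
  carrier : Type;
  op : carrier -> carrier -> carrier;
  one : carrier;
  op_assoc : forall a b c, op a (op b c) = op (op a b) c;
  op_one_l : forall a, op one a = a;
  op_one_r : forall a, op a one = a }.

Definition raw (M : Monoid) : RawMonoid :=
  {| rcar := carrier M; rop := @op M; rone := one M |}.

Section Coherence.
Variable S : RawMonoid.
Local Notation "x * y" := (rop S x y).

Definition free_act (n : nat) := (Fin.t n * rcar S)%type.
Definition free_act_mul n (x : free_act n) (t : rcar S) : free_act n :=
  (fst x, snd x * t).

Definition right_congruence n (rho : free_act n -> free_act n -> Prop) : Prop :=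
  (forall x, rho x x) /\ (forall x y, rho x y -> rho y x) /\
  (forall x y z, rho x y -> rho y z -> rho x z) /\
  (forall x y t, rho x y -> rho (free_act_mul x t) (free_act_mul y t)).

Definition gen_congruence n (H : list (free_act n * free_act n))
  (x y : free_act n) : Prop :=
  forall rho, right_congruence rho ->
    (forall p, In p H -> rho (fst p) (snd p)) -> rho x y.

(* A subset J of S closed under right multiplication, viewed as a right
   S-act, is finitely presented: there is an epimorphism of right acts from a
   free act of finite rank onto J whose kernel is a finitely generated
   right congruence (i.e. J is isomorphic to F_n / <H> with H finite). *)
Definition fin_presented_subact (J : rcar S -> Prop) : Prop :=
  exists (n : nat) (phi : free_act n -> rcar S) (H : list (free_act n * free_act n)),
    (forall x t, phi (free_act_mul x t) = phi x * t) /\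
    (forall x, J (phi x)) /\
    (forall a, J a -> exists x, phi x = a) /\
    (forall x y, phi x = phi y <-> gen_congruence H x y).

Definition gen_right_ideal (X : list (rcar S)) (a : rcar S) : Prop :=
  exists b s, In b X /\ a = b * s.

Definition weakly_right_coherent : Prop :=
  forall X : list (rcar S), X <> [] -> fin_presented_subact (gen_right_ideal X).

End Coherence.

Section FreeProduct.
Variable Idx : Type.
Variable M : Idx -> Monoid.

Definition letter := {i : Idx & carrier (M i)}.

Fixpoint reduced (w : list letter) : Prop :=
  match w with
  | [] => True
  | x :: w' =>
      projT2 x <> one (M (projT1 x)) /\
      match w' with [] => True | y :: _ => projT1 x <> projT1 y end /\
      reduced w'
  end.

Definition dec (P : Prop) : {P} + {~ P} := excluded_middle_informative P.

Definition lmul (x : letter) (s : list letter) : list letter :=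
  if dec (projT2 x = one (M (projT1 x))) then s else
  match s with
  | [] => [x]
  | y :: s' =>
      match dec (projT1 y = projT1 x) with
      | left e =>
          let z := @op (M (projT1 x)) (projT2 x)
                      (eq_rect _ (fun i => carrier (M i)) (projT2 y) _ e) in
          if dec (z = one (M (projT1 x))) then s'
          else existT _ (projT1 x) z :: s'
      | right _ => x :: s
      end
  end.

Lemma reduced_tail x s : reduced (x :: s) -> reduced s.
Proof. simpl; tauto. Qed.

Lemma lmul_reduced x s : reduced s -> reduced (lmul x s).
Proof.
  intros Hs. unfold lmul.
  destruct (dec _) as [_|Hx]; [exact Hs|].
  destruct s as [|y s'].
  - simpl; tauto.
  - destruct (dec (projT1 y = projT1 x)) as [e|ne].
    + destruct (dec _) as [_|Hz]; [exact (reduced_tail Hs)|].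
      destruct Hs as [_ [Hys Hs']].
      simpl. split; [exact Hz|]. split; [|exact Hs'].
      destruct s' as [|w s'']; [exact I|]. rewrite <- e. exact Hys.
    + simpl. split; [exact Hx|]. split; [intro E; apply ne; symmetry; exact E|].
      exact Hs.
Qed.

Definition word_mul (u v : list letter) : list letter := fold_right lmul v u.

Lemma word_mul_reduced u v : reduced v -> reduced (word_mul u v).
Proof. induction u; simpl; auto using lmul_reduced. Qed.

Definition fp_elt := {w : list letter | reduced w}.

Definition fp_mul (u v : fp_elt) : fp_elt :=
  exist _ (word_mul (proj1_sig u) (proj1_sig v))
          (@word_mul_reduced (proj1_sig u) (proj1_sig v) (proj2_sig v)).

Definition fp_one : fp_elt := exist _ [] I.

Definition free_product : RawMonoid :=
  {| rcar := fp_elt; rop := fp_mul; rone := fp_one |}.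

End FreeProduct.

(* Main.v *)
Require Import Defs.
From Stdlib Require Import List ClassicalEpsilon Fin ProofIrrelevance Classical Eqdep.
Import ListNotations.
Set Implicit Arguments.

Section Gen.
Variable S : RawMonoid.

Lemma gen_rc n (H : list (free_act S n * free_act S n)) : right_congruence (gen_congruence H).
Proof.
  repeat split.
  - intros x rho [Hr _] _. apply Hr.
  - intros x y Hxy rho Hrho HH. apply (proj1 (proj2 Hrho)). apply Hxy; auto.
  - intros x y z H1 H2 rho Hrho HH. apply (proj1 (proj2 (proj2 Hrho)) x y z); [apply H1|apply H2]; auto.
  - intros x y t Hxy rho Hrho HH. apply (proj2 (proj2 (proj2 Hrho))). apply Hxy; auto.
Qed.

Lemma gen_refl n (H : list (free_act S n * free_act S n)) x : gen_congruence H x x.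
Proof. apply (proj1 (gen_rc H)). Qed.
Lemma gen_sym n (H : list (free_act S n * free_act S n)) x y :
  gen_congruence H x y -> gen_congruence H y x.
Proof. apply (proj1 (proj2 (gen_rc H))). Qed.
Lemma gen_trans n (H : list (free_act S n * free_act S n)) x y z :
  gen_congruence H x y -> gen_congruence H y z -> gen_congruence H x z.
Proof. apply (proj1 (proj2 (proj2 (gen_rc H)))). Qed.
Lemma gen_mul n (H : list (free_act S n * free_act S n)) x y t :
  gen_congruence H x y -> gen_congruence H (free_act_mul x t) (free_act_mul y t).
Proof. apply (proj2 (proj2 (proj2 (gen_rc H)))). Qed.
Lemma gen_base n (H : list (free_act S n * free_act S n)) p :
  In p H -> gen_congruence H (fst p) (snd p).
Proof. intros Hp rho _ HH. apply HH; auto. Qed.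
Lemma gen_in n (H : list (free_act S n * free_act S n)) x y :
  In (x, y) H -> gen_congruence H x y.
Proof. intros Hp. exact (gen_base H (x, y) Hp). Qed.
Lemma gen_min n (H : list (free_act S n * free_act S n)) rho :
  right_congruence rho -> (forall p, In p H -> rho (fst p) (snd p)) ->
  forall x y, gen_congruence H x y -> rho x y.
Proof. intros Hr HH x y G. apply G; auto. Qed.
Lemma gen_mono n (H H' : list (free_act S n * free_act S n)) :
  (forall p, In p H -> In p H') -> forall x y, gen_congruence H x y -> gen_congruence H' x y.
Proof. intros Hi x y G. eapply gen_min; [apply (gen_rc H')| |exact G]. intros p Hp. apply gen_base; auto. Qed.

Lemma gen_app_l n (H1 H2 : list (free_act S n * free_act S n)) x y :
  gen_congruence H1 x y -> gen_congruence (H1 ++ H2) x y.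
Proof. apply gen_mono. intros; apply in_or_app; auto. Qed.
Lemma gen_app_r n (H1 H2 : list (free_act S n * free_act S n)) x y :
  gen_congruence H2 x y -> gen_congruence (H1 ++ H2) x y.
Proof. apply gen_mono. intros; apply in_or_app; auto. Qed.

Lemma ker_rc n (phi : free_act S n -> rcar S) :
  (forall x t, phi (free_act_mul x t) = rop S (phi x) t) ->
  right_congruence (fun x y => phi x = phi y).
Proof.
  intros Hphi. repeat split; intros; try congruence.
Qed.
End Gen.

Lemma gen_transport (S T : RawMonoid) n m (nu : free_act S n -> free_act T m)
  (f : rcar S -> rcar T) (H : list (free_act S n * free_act S n))
  (H' : list (free_act T m * free_act T m)) :
  (forall x t, nu (free_act_mul x t) = free_act_mul (nu x) (f t)) ->
  (forall p, In p H -> gen_congruence H' (nu (fst p)) (nu (snd p))) ->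
  forall x y, gen_congruence H x y -> gen_congruence H' (nu x) (nu y).
Proof.
  intros Hnu HH x y G.
  eapply (gen_min (rho := fun x y => gen_congruence H' (nu x) (nu y))); [|exact HH|exact G].
  repeat split.
  - intros; apply gen_refl.
  - intros; apply gen_sym; auto.
  - intros a b c; apply gen_trans.
  - intros a b t Hab. rewrite !Hnu. apply gen_mul; auto.
Qed.

Fixpoint all_fin (n : nat) : list (Fin.t n) :=
  match n with 0 => [] | S n' => Fin.F1 :: map Fin.FS (all_fin n') end.

Lemma all_fin_In n (k : Fin.t n) : In k (all_fin n).
Proof.
  induction k; simpl; auto. right. apply in_map; auto.
Qed.

Lemma choice_fun (A B : Type) (R : A -> B -> Prop) :
  (forall x, exists y, R x y) -> exists f : A -> B, forall x, R x (f x).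
Proof.
  intros H. exists (fun x => proj1_sig (constructive_indefinite_description _ (H x))).
  intros x. exact (proj2_sig (constructive_indefinite_description _ (H x))).
Qed.

Section Mon.
Variable S : Monoid.
Local Notation "x * y" := (op S x y).
Local Notation A n := (free_act (raw S) n).

Lemma fam_one n (x : A n) : x = @free_act_mul (raw S) n (fst x, one S) (snd x).
Proof. destruct x as [k s]. unfold free_act_mul; simpl. rewrite op_one_l. reflexivity. Qed.

Lemma transfer n1 n2 (phi1 : A n1 -> carrier S) (phi2 : A n2 -> carrier S)
  (th : A n1 -> A n2) (ps : A n2 -> A n1) (H2 : list (A n2 * A n2)) :
  (forall x t, phi1 (free_act_mul x t) = phi1 x * t) ->
  (forall x t, th (free_act_mul x t) = free_act_mul (th x) t) ->
  (forall x t, ps (free_act_mul x t) = free_act_mul (ps x) t) ->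
  (forall x, phi2 (th x) = phi1 x) ->
  (forall y, phi1 (ps y) = phi2 y) ->
  (forall x y, phi2 x = phi2 y <-> gen_congruence H2 x y) ->
  exists H1 : list (A n1 * A n1), forall x y, phi1 x = phi1 y <-> gen_congruence H1 x y.
Proof.
  intros act1 tha psa c1 c2 HH2.
  set (E := map (fun k => ((k, one S), ps (th (k, one S)))) (all_fin n1)).
  exists (map (fun p => (ps (fst p), ps (snd p))) H2 ++ E).
  assert (HE : forall x, gen_congruence (map (fun p => (ps (fst p), ps (snd p))) H2 ++ E) x (ps (th x))).
  { intros x. rewrite (fam_one x). rewrite tha, psa. apply gen_mul.
    apply gen_in.
    apply in_or_app; right. unfold E. apply in_map_iff. exists (fst x). split; auto. apply all_fin_In. }
  intros x y; split.
  - intros Hxy. eapply gen_trans; [apply HE|]. eapply gen_trans; [|apply gen_sym, HE].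
    apply (@gen_transport _ _ _ _ ps (fun t => t) H2); auto.
    + intros p Hp. apply gen_in. apply in_or_app; left.
      apply in_map_iff. exists p; auto.
    + apply HH2. rewrite !c1; auto.
  - intros G. refine (gen_min (rho := fun a b => phi1 a = phi1 b) _ _ G).
    { apply ker_rc. exact act1. }
    intros p Hp. apply in_app_or in Hp. destruct Hp as [Hp|Hp].
    + apply in_map_iff in Hp. destruct Hp as [q [Eq Hq]]. subst p. simpl.
      rewrite !c2. apply HH2. apply gen_base; auto.
    + unfold E in Hp. apply in_map_iff in Hp. destruct Hp as [k [Eq _]]. subst p. simpl.
      rewrite c2, c1. reflexivity.
Qed.

Definition sel (a b : carrier S) n (k : Fin.t n) : carrier S :=
  match k with Fin.F1 => a | Fin.FS _ => b end.
Definition pv (a b : carrier S) (x : A 2) : carrier S := sel a b (fst x) * snd x.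
Definition K2 (a b : carrier S) : Prop :=
  exists H : list (A 2 * A 2), forall x y, pv a b x = pv a b y <-> gen_congruence H x y.

Lemma pv_act a b x t : pv a b (free_act_mul x t) = pv a b x * t.
Proof. destruct x; unfold pv; simpl. apply op_assoc. Qed.

Lemma sel_map (B : Type) (f : B -> carrier S) (a b : B) m (k : Fin.t m) :
  f (match k with Fin.F1 => a | Fin.FS _ => b end) = sel (f a) (f b) k.
Proof. destruct k; reflexivity. Qed.

Lemma family_from_pairs (HK : forall a b, K2 a b) n (g : Fin.t n -> carrier S) :
  exists H : list (A n * A n), forall x y,
    g (fst x) * snd x = g (fst y) * snd y <-> gen_congruence H x y.
Proof.
  destruct (choice_fun (fun (kl : Fin.t n * Fin.t n) H => forall x y,
     pv (g (fst kl)) (g (snd kl)) x = pv (g (fst kl)) (g (snd kl)) y <-> gen_congruence H x y))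
    as [Hf HHf].
  { intros kl. apply HK. }
  set (e := fun (kl : Fin.t n * Fin.t n) (x : A 2) =>
              ((match fst x with Fin.F1 => fst kl | Fin.FS _ => snd kl end), snd x) : A n).
  set (H := flat_map (fun kl => map (fun p => (e kl (fst p), e kl (snd p))) (Hf kl))
                     (list_prod (all_fin n) (all_fin n))).
  exists H. intros x y. split.
  - intros Hxy. destruct x as [k s], y as [l t].
    assert (G : gen_congruence (Hf (k, l)) (Fin.F1, s) (Fin.FS Fin.F1, t)).
    { apply HHf. exact Hxy. }
    apply (@gen_transport _ _ _ _ (e (k, l)) (fun t => t) (Hf (k,l)) H) in G.
    + exact G.
    + intros [k0 s0] u; unfold e; simpl; destruct k0; reflexivity.
    + intros p Hp. apply gen_in.
      unfold H. apply in_flat_map. exists (k,l). split.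
      * apply in_prod; apply all_fin_In.
      * apply in_map_iff. exists p; auto.
  - intros G. refine (gen_min (rho := fun a b : A n => g (fst a) * snd a = g (fst b) * snd b) _ _ G).
    + apply (@ker_rc (raw S) n (fun x : A n => g (fst x) * snd x)). intros [k s] t; simpl.
      apply op_assoc.
    + intros p Hp. unfold H in Hp. apply in_flat_map in Hp.
      destruct Hp as [kl [_ Hp]]. apply in_map_iff in Hp. destruct Hp as [q [Eq Hq]].
      subst p. simpl.
      assert (Q : pv (g (fst kl)) (g (snd kl)) (fst q) = pv (g (fst kl)) (g (snd kl)) (snd q)).
      { apply HHf. apply gen_base; auto. }
      revert Q. unfold pv, e. destruct q as [[k1 s1] [k2 s2]]. simpl.
      rewrite (sel_map g (fst kl) (snd kl) k1), (sel_map g (fst kl) (snd kl) k2). auto.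
Qed.

Theorem wrc_iff_K2 : weakly_right_coherent (raw S) <-> forall a b, K2 a b.
Proof.
  split.
  - intros W a b. destruct (W [a; b]) as [n [phi [H [Hact [HJ [Hsur Hker]]]]]]; [discriminate|].
    destruct (choice_fun (fun (k : Fin.t 2) x => phi x = sel a b k)) as [xk Hxk].
    { intros k. apply Hsur. exists (sel a b k), (one S). split.
      - destruct k; simpl; auto.
      - simpl. rewrite op_one_r. reflexivity. }
    destruct (choice_fun (fun (j : Fin.t n) (kv : Fin.t 2 * carrier S) =>
                 phi (j, one S) = sel a b (fst kv) * snd kv)) as [kv Hkv].
    { intros j. destruct (HJ (j, one S)) as [bb [s [Hin Heq]]].
      simpl in Hin. destruct Hin as [<-|[<-|[]]].
      - exists (Fin.F1, s). exact Heq.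
      - exists (Fin.FS Fin.F1, s). exact Heq. }
    apply (@transfer 2 n (pv a b) phi
             (fun x => (fst (xk (fst x)), snd (xk (fst x)) * snd x))
             (fun y => (fst (kv (fst y)), snd (kv (fst y)) * snd y)) H).
    + apply pv_act.
    + intros [k s] t; unfold free_act_mul; simpl. rewrite op_assoc; reflexivity.
    + intros [k s] t; unfold free_act_mul; simpl. rewrite op_assoc; reflexivity.
    + intros [k s]. unfold pv. simpl. rewrite <- (Hxk k). exact (Hact (xk k) s).
    + intros [j s]. unfold pv; simpl. rewrite op_assoc, <- Hkv.
      rewrite <- (Hact (j, one S) s : phi _ = phi (j, one S) * s). unfold free_act_mul; simpl. rewrite op_one_l. reflexivity.
    + exact Hker.
  - intros HK X HX.
    set (g := fun k : Fin.t (length X) => nth (proj1_sig (Fin.to_nat k)) X (one S)).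
    destruct (family_from_pairs HK g) as [H HH].
    exists (length X), (fun x => g (fst x) * snd x), H. repeat split.
    + intros [k s] t; simpl. apply op_assoc.
    + intros [k s]. exists (g k), s. split; auto.
      unfold g. apply nth_In. apply (proj2_sig (Fin.to_nat k)).
    + intros a [b [s [Hb Ha]]]. destruct (In_nth X b (one S) Hb) as [m [Hm Hn]].
      exists (Fin.of_nat_lt Hm, s). simpl. unfold g. rewrite Fin.to_nat_of_nat. simpl.
      subst a. simpl. f_equal. exact Hn.
    + intros Hxy. apply HH; auto.
    + intros Hxy. apply HH; auto.
Qed.

Lemma fin2_cases (k : Fin.t 2) : k = Fin.F1 \/ k = Fin.FS Fin.F1.
Proof.
  pattern k; apply Fin.caseS'; [left; reflexivity|].
  intros k'; pattern k'; apply Fin.caseS'; [right; reflexivity|].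
  intros k''. inversion k''.
Qed.

Lemma sel_same a m (k : Fin.t m) : sel a a k = a.
Proof. destruct k; reflexivity. Qed.

Lemma K2_of_parts a b (H : list (A 2 * A 2)) :
  (forall s t, a * s = a * t -> gen_congruence H (Fin.F1, s) (Fin.F1, t)) ->
  (forall s t, b * s = b * t -> gen_congruence H (Fin.FS Fin.F1, s) (Fin.FS Fin.F1, t)) ->
  (forall s t, a * s = b * t -> gen_congruence H (Fin.F1, s) (Fin.FS Fin.F1, t)) ->
  (forall p, In p H -> pv a b (fst p) = pv a b (snd p)) ->
  K2 a b.
Proof.
  intros H1 H2 H3 H4. exists H. intros [k s] [l t]. split.
  - unfold pv; simpl. intros E.
    destruct (fin2_cases k) as [->| ->], (fin2_cases l) as [->| ->]; simpl in E.
    + apply H1; auto.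
    + apply H3; auto.
    + apply gen_sym. apply H3; auto.
    + apply H2; auto.
  - intros G. refine (gen_min (rho := fun x y => pv a b x = pv a b y) _ _ G).
    + apply ker_rc. apply pv_act.
    + exact H4.
Qed.

Lemma K2_equiv a b a' b' u v u' v' :
  a' = a * u -> a = a' * v -> b' = b * u' -> b = b' * v' -> K2 a' b' -> K2 a b.
Proof.
  intros E1 E2 E3 E4 [H HH].
  destruct (@transfer 2 2 (pv a b) (pv a' b')
             (fun x => (fst x, sel v v' (fst x) * snd x))
             (fun y => (fst y, sel u u' (fst y) * snd y)) H) as [H1 HH1].
  - apply pv_act.
  - intros [k s] t; unfold free_act_mul; simpl. rewrite op_assoc; reflexivity.
  - intros [k s] t; unfold free_act_mul; simpl. rewrite op_assoc; reflexivity.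
  - intros [k s]. unfold pv; simpl. rewrite op_assoc.
    destruct (fin2_cases k) as [->| ->]; simpl; congruence.
  - intros [k s]. unfold pv; simpl. rewrite op_assoc.
    destruct (fin2_cases k) as [->| ->]; simpl; congruence.
  - exact HH.
  - exists H1; exact HH1.
Qed.
End Mon.

Section FP.
Variable Idx : Type.
Variable M : Idx -> Monoid.
Local Notation L := (letter M).
Local Notation lmul := (@Defs.lmul Idx M).
Local Notation word_mul := (@Defs.word_mul Idx M).
Local Notation reduced := (@Defs.reduced Idx M).
Local Notation lt j c := (existT (fun i => carrier (M i)) j c : letter M).

Lemma dec_refl_eq (P : Prop) (p : P) : exists q, dec P = left q.
Proof. destruct (dec P) as [q|n]; [eauto|contradiction]. Qed.

Ltac uip_dec :=
  match goal with
  | |- context [dec (?a = ?a)] =>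
      let e := fresh "e" in
      destruct (dec (a = a)) as [e|e];
      [ rewrite (proof_irrelevance _ e eq_refl) | exfalso; apply e; reflexivity ]
  end.

Lemma lmul_one j s : lmul (lt j (one (M j))) s = s.
Proof. unfold lmul; simpl. destruct (dec _) as [_|n]; [reflexivity|contradiction]. Qed.

Lemma lmul_nil j c : c <> one (M j) -> lmul (lt j c) [] = [lt j c].
Proof. intros Hc. unfold lmul; simpl. destruct (dec _); [contradiction|reflexivity]. Qed.

Lemma lmul_same j c d s : c <> one (M j) ->
  lmul (lt j c) (lt j d :: s) =
  if dec (op (M j) c d = one (M j)) then s else lt j (op (M j) c d) :: s.
Proof. intros Hc. unfold lmul; simpl. destruct (dec (c = _)); [contradiction|]. uip_dec. reflexivity. Qed.

Lemma lmul_diff j c j' d s : c <> one (M j) -> j' <> j ->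
  lmul (lt j c) (lt j' d :: s) = lt j c :: lt j' d :: s.
Proof. intros Hc Hj. unfold lmul; simpl. destruct (dec (c = _)); [contradiction|].
  destruct (dec (j' = j)); [contradiction|reflexivity]. Qed.

Lemma lmul_cons_red x s : reduced (x :: s) -> lmul x s = x :: s.
Proof.
  destruct x as [j c]. intros [Hc [Hh Hs]]. simpl in *.
  destruct s as [|[j' d] s']. - apply lmul_nil; auto.
  - apply lmul_diff; auto.
Qed.

Lemma word_mul_nil_r u : reduced u -> word_mul u [] = u.
Proof.
  induction u as [|x u IH]; intros Hu; simpl; auto.
  rewrite IH by (eapply reduced_tail; eauto). apply lmul_cons_red; auto.
Qed.

Lemma reduced_cons_inv j c s : reduced (lt j c :: s) ->
  c <> one (M j) /\ reduced s /\ match s with [] => True | y :: _ => j <> projT1 y end.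
Proof. simpl; tauto. Qed.

Lemma lmul_act j (a b : carrier (M j)) s : reduced s ->
  lmul (lt j a) (lmul (lt j b) s) = lmul (lt j (op (M j) a b)) s.
Proof.
  intros Hs.
  destruct (dec (b = one (M j))) as [Hb|Hb].
  { subst b. rewrite lmul_one, op_one_r. reflexivity. }
  destruct (dec (a = one (M j))) as [Ha|Ha].
  { subst a. rewrite lmul_one, op_one_l. reflexivity. }
  destruct s as [|[j' d] s'].
  - rewrite lmul_nil by auto. rewrite lmul_same by auto.
    destruct (dec (op (M j) a b = one (M j))) as [E|E].
    + rewrite E, lmul_one. reflexivity.
    + rewrite lmul_nil; auto.
  - destruct (dec (j' = j)) as [e|ne].
    + subst j'. apply reduced_cons_inv in Hs. destruct Hs as [Hd [Hs' Hh]].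
      rewrite lmul_same by auto.
      destruct (dec (op (M j) b d = one (M j))) as [E1|E1].
      * rewrite lmul_cons_red.
        2:{ simpl. repeat split; auto. }
        destruct (dec (op (M j) a b = one (M j))) as [E2|E2].
        -- rewrite E2, lmul_one.
           assert (a = d). { rewrite <- (op_one_r (M j) a), <- E1, op_assoc, E2, op_one_l. reflexivity. }
           subst; reflexivity.
        -- rewrite lmul_same by auto. rewrite <- op_assoc, E1, op_one_r.
           destruct (dec (a = one (M j))); [contradiction|reflexivity].
      * rewrite lmul_same by auto.
        destruct (dec (op (M j) a b = one (M j))) as [E2|E2].
        -- rewrite E2, lmul_one. rewrite op_assoc, E2, op_one_l.
           destruct (dec (d = one (M j))); [contradiction|reflexivity].
        -- rewrite lmul_same by auto. rewrite op_assoc. reflexivity.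
    + rewrite lmul_diff by auto. rewrite lmul_same by auto.
      destruct (dec (op (M j) a b = one (M j))) as [E2|E2].
      * rewrite E2, lmul_one. reflexivity.
      * rewrite lmul_diff; auto.
Qed.

Lemma lmul_word x s w : reduced s -> reduced w ->
  word_mul (lmul x s) w = lmul x (word_mul s w).
Proof.
  destruct x as [j c]. intros Hs Hw.
  destruct (dec (c = one (M j))) as [Hc|Hc].
  { subst c. rewrite !lmul_one. reflexivity. }
  destruct s as [|[j' d] s'].
  - rewrite lmul_nil by auto. reflexivity.
  - destruct (dec (j' = j)) as [e|ne].
    + subst j'. rewrite lmul_same by auto. simpl.
      assert (R : reduced (word_mul s' w)) by (apply word_mul_reduced; auto).
      rewrite lmul_act by auto.
      destruct (dec (op (M j) c d = one (M j))) as [E|E].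
      * rewrite E, lmul_one. reflexivity.
      * reflexivity.
    + rewrite lmul_diff by auto. reflexivity.
Qed.

Lemma word_mul_assoc u v w : reduced v -> reduced w ->
  word_mul (word_mul u v) w = word_mul u (word_mul v w).
Proof.
  intros Hv Hw. induction u as [|x u IH]; simpl; auto.
  rewrite lmul_word; auto. rewrite IH; auto. apply word_mul_reduced; auto.
Qed.

Lemma fp_eq (u v : fp_elt M) : proj1_sig u = proj1_sig v -> u = v.
Proof.
  destruct u as [u Hu], v as [v Hv]; simpl. intros E; subst v.
  rewrite (proof_irrelevance _ Hu Hv). reflexivity.
Qed.

Definition Fmon : Monoid.
Proof.
  refine {| carrier := fp_elt M; op := @fp_mul Idx M; one := fp_one M |}.
  - intros a b c. apply fp_eq. simpl. symmetry. apply word_mul_assoc.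
    + apply (proj2_sig b).
    + apply (proj2_sig c).
  - intros a. apply fp_eq. reflexivity.
  - intros a. apply fp_eq. simpl. apply word_mul_nil_r. apply (proj2_sig a).
Defined.

Lemma Fmon_raw : raw Fmon = free_product M.
Proof. reflexivity. Qed.


Definition iota_w j (m : carrier (M j)) : list L :=
  if dec (m = one (M j)) then [] else [lt j m].

Lemma iota_w_reduced j m : reduced (iota_w j m).
Proof. unfold iota_w. destruct (dec _); simpl; auto. Qed.

Definition iota j (m : carrier (M j)) : fp_elt M := exist _ (iota_w j m) (iota_w_reduced j m).

Lemma iota_w_mul j a b : word_mul (iota_w j a) (iota_w j b) = iota_w j (op (M j) a b).
Proof.
  unfold iota_w.
  destruct (dec (a = one (M j))) as [Ha|Ha].
  { subst a. rewrite op_one_l. reflexivity. }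
  destruct (dec (b = one (M j))) as [Hb|Hb].
  { subst b. rewrite op_one_r. simpl. rewrite lmul_nil by auto.
    destruct (dec (a = one (M j))); [contradiction|reflexivity]. }
  simpl. rewrite lmul_same by auto.
  destruct (dec (op (M j) a b = one (M j))); reflexivity.
Qed.

Lemma iota_mul j a b : iota j (op (M j) a b) = fp_mul (iota j a) (iota j b).
Proof. apply fp_eq. simpl. symmetry. apply iota_w_mul. Qed.

Definition lv i (x : L) : carrier (M i) :=
  match dec (projT1 x = i) with
  | left e => eq_rect _ (fun k => carrier (M k)) (projT2 x) _ e
  | right _ => one (M i)
  end.

Definition proj i (w : list L) : carrier (M i) :=
  fold_right (fun x acc => op (M i) (lv i x) acc) (one (M i)) w.

Lemma lv_one i j : lv i (lt j (one (M j))) = one (M i).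
Proof. unfold lv; simpl. destruct (dec (j = i)) as [e|e]; [subst; reflexivity|reflexivity]. Qed.

Lemma lv_mul i j c d : lv i (lt j (op (M j) c d)) = op (M i) (lv i (lt j c)) (lv i (lt j d)).
Proof. unfold lv; simpl. destruct (dec (j = i)) as [e|e]; [subst; reflexivity|].
  rewrite op_one_l. reflexivity. Qed.

Lemma proj_lmul i x s : proj i (lmul x s) = op (M i) (lv i x) (proj i s).
Proof.
  destruct x as [j c].
  destruct (dec (c = one (M j))) as [Hc|Hc].
  { subst c. rewrite lmul_one, lv_one, op_one_l. reflexivity. }
  destruct s as [|[j' d] s'].
  - rewrite lmul_nil by auto. reflexivity.
  - destruct (dec (j' = j)) as [e|ne].
    + subst j'. rewrite lmul_same by auto. simpl.
      destruct (dec (op (M j) c d = one (M j))) as [E|E].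
      * rewrite op_assoc, <- lv_mul, E, lv_one, op_one_l. reflexivity.
      * simpl. rewrite op_assoc, <- lv_mul. reflexivity.
    + rewrite lmul_diff by auto. reflexivity.
Qed.

Lemma proj_mul i u v : proj i (word_mul u v) = op (M i) (proj i u) (proj i v).
Proof.
  induction u as [|x u IH]; simpl.
  - rewrite op_one_l. reflexivity.
  - rewrite proj_lmul, IH, op_assoc. reflexivity.
Qed.

Lemma proj_iota i m : proj i (iota_w i m) = m.
Proof.
  unfold iota_w. destruct (dec (m = one (M i))) as [E|E]; [simpl; auto|].
  simpl. unfold lv; simpl. uip_dec. simpl. apply op_one_r.
Qed.

Definition hd j (s : list L) : carrier (M j) :=
  match s with
  | [] => one (M j)
  | y :: _ => match dec (projT1 y = j) with
              | left e => eq_rect _ (fun k => carrier (M k)) (projT2 y) _ e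
              | right _ => one (M j) end
  end.

Definition tl j (s : list L) : list L :=
  match s with
  | [] => []
  | y :: s' => if dec (projT1 y = j) then s' else s
  end.

Definition starts_not j (w : list L) : Prop :=
  match w with [] => True | y :: _ => projT1 y <> j end.

Lemma tl_reduced j s : reduced s -> reduced (tl j s).
Proof. destruct s as [|y s']; simpl; auto. destruct (dec _); simpl; tauto. Qed.

Lemma tl_starts j s : reduced s -> starts_not j (tl j s).
Proof.
  destruct s as [|[j' d] s']; simpl; auto. intros [_ [Hh _]].
  destruct (dec (j' = j)) as [e|e]; simpl; auto.
  subst. destruct s' as [|y s'']; simpl; auto.
Qed.

Lemma lmul_nonunit j z s : (forall u, op (M j) z u <> one (M j)) -> reduced s ->
  lmul (lt j z) s = lt j (op (M j) z (hd j s)) :: tl j s.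
Proof.
  intros Hz Hs.
  assert (Hz1 : z <> one (M j)). { intros E. apply (Hz (one (M j))). rewrite op_one_r; auto. }
  destruct s as [|[j' d] s'].
  - simpl. rewrite op_one_r. apply lmul_nil; auto.
  - unfold hd, tl; simpl. destruct (dec (j' = j)) as [e|ne].
    + subst j'. simpl. rewrite lmul_same by auto.
      destruct (dec _) as [E|E]; [exfalso; eapply Hz; eauto|reflexivity].
    + rewrite op_one_r. apply lmul_diff; auto.
Qed.

Lemma split_iota j s : reduced s -> word_mul (iota_w j (hd j s)) (tl j s) = s.
Proof.
  intros Hs. destruct s as [|[j' d] s'].
  - simpl. unfold iota_w. destruct (dec _) as [_|n]; [reflexivity|contradiction].
  - unfold hd, tl; simpl. destruct (dec (j' = j)) as [e|ne].
    + subst j'. simpl. unfold iota_w. destruct (dec (d = one (M j))) as [E|E].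
      * exfalso. destruct Hs as [Hd _]. apply Hd; auto.
      * simpl. apply lmul_cons_red; auto.
    + unfold iota_w. destruct (dec _) as [_|n]; [reflexivity|contradiction].
Qed.

Lemma hd_tl_iota j m r : starts_not j r ->
  hd j (iota_w j m ++ r) = m /\ tl j (iota_w j m ++ r) = r.
Proof.
  intros Hr. unfold iota_w. destruct (dec (m = one (M j))) as [E|E].
  - subst m. simpl. destruct r as [|[j' d] r']; simpl; auto.
    simpl in Hr. destruct (dec (j' = j)); [contradiction|auto].
  - simpl. uip_dec. simpl. auto.
Qed.

Lemma reduced_iota_app j m r : starts_not j r -> reduced r -> reduced (iota_w j m ++ r).
Proof.
  intros Hs Hr. unfold iota_w. destruct (dec _) as [E|E]; simpl; auto.
  repeat split; auto. destruct r as [|y r']; simpl in *; auto.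
Qed.

Lemma reduced_app p q : reduced (p ++ q) -> reduced p /\ reduced q.
Proof.
  induction p as [|x p IH]; simpl; intros H; [split; auto; exact I|].
  destruct H as [H1 [H2 H3]]. destruct (IH H3) as [R1 R2]. split; auto.
  repeat split; auto. destruct p; simpl in *; auto.
Qed.

Lemma reduced_app_swap p x x' v : reduced (p ++ [x]) -> projT1 x' = projT1 x ->
  reduced (x' :: v) -> reduced (p ++ x' :: v).
Proof.
  induction p as [|y p IH]; simpl; intros H E R; auto.
  destruct H as [H1 [H2 H3]]. repeat split; auto.
  destruct p as [|z p']; simpl in *; congruence.
Qed.

Lemma word_mul_concat p v : reduced (p ++ v) -> word_mul p v = p ++ v.
Proof.
  induction p as [|x p IH]; simpl; intros H; auto.
  rewrite IH by (eapply reduced_tail; eauto). apply lmul_cons_red; auto.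
Qed.

Lemma app_cons_cases (T : Type) (p q : list T) c d s t :
  p ++ c :: s = q ++ d :: t ->
  (p = q /\ c = d /\ s = t) \/ (exists r, q = p ++ c :: r) \/ (exists r, p = q ++ d :: r).
Proof.
  revert q. induction p as [|x p IH]; intros q E; destruct q as [|y q]; simpl in *.
  - inversion E; subst; left; auto.
  - inversion E; subst. right; left. exists q; auto.
  - inversion E; subst. right; right. exists p; auto.
  - inversion E; subst. destruct (IH q H1) as [[-> [-> ->]]|[[r ->]|[r ->]]].
    + left; auto.
    + right; left; exists r; auto.
    + right; right; exists r; auto.
Qed.

Lemma mul_norm p j z s : reduced (p ++ [lt j z]) -> (forall u, op (M j) z u <> one (M j)) ->
  reduced s -> word_mul (p ++ [lt j z]) s = p ++ lt j (op (M j) z (hd j s)) :: tl j s.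
Proof.
  intros Hp Hz Hs. unfold word_mul. rewrite fold_right_app. fold (word_mul p (word_mul [lt j z] s)).
  simpl. rewrite lmul_nonunit by auto. apply word_mul_concat.
  apply (reduced_app_swap p (lt j z)); auto.
  rewrite <- lmul_nonunit by auto. apply lmul_reduced; auto.
Qed.

Local Notation F := Fmon.

Definition norm (w : list L) : Prop :=
  w = [] \/ exists p j z, w = p ++ [lt j z] /\ forall u, op (M j) z u <> one (M j).

Lemma normalize_w w : reduced w -> exists w' u v, reduced w' /\ reduced u /\ reduced v /\
  norm w' /\ w' = word_mul w u /\ w = word_mul w' v.
Proof.
  induction w as [|x p IH] using rev_ind; intros Hw.
  - exists [], [], []. repeat split; auto. left; auto.
  - destruct x as [j c]. destruct (reduced_app _ _ Hw) as [Hp Hx].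
    assert (Hc : c <> one (M j)) by (simpl in Hx; tauto).
    destruct (classic (exists u, op (M j) c u = one (M j))) as [[u Hu]|Hn].
    + destruct (IH Hp) as [p' [up [vp [R1 [R2 [R3 [N [E1 E2]]]]]]]].
      assert (Hu1 : u <> one (M j)).
      { intros E; subst u. rewrite op_one_r in Hu. contradiction. }
      assert (Hiw : iota_w j u = [lt j u]).
      { unfold iota_w. destruct (dec _); [contradiction|reflexivity]. }
      assert (K1 : word_mul (p ++ [lt j c]) (iota_w j u) = p).
      { rewrite Hiw. unfold word_mul at 1. rewrite fold_right_app. simpl.
        rewrite lmul_same by auto.
        destruct (dec _); [|contradiction]. apply word_mul_nil_r; auto. }
      assert (K2' : word_mul p [lt j c] = p ++ [lt j c]) by (apply word_mul_concat; auto).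
      exists p', (word_mul (iota_w j u) up), (word_mul vp [lt j c]).
      repeat split; auto.
      * apply word_mul_reduced; auto.
      * apply word_mul_reduced; auto.
      * rewrite <- word_mul_assoc; auto; [|apply iota_w_reduced]. rewrite K1. auto.
      * rewrite <- word_mul_assoc; auto. rewrite <- E2. auto.
    + exists (p ++ [lt j c]), [], []. repeat split; auto.
      * right. exists p, j, c. split; auto. intros u E. apply Hn. eauto.
      * symmetry; apply word_mul_nil_r; auto.
      * symmetry; apply word_mul_nil_r; auto.
Qed.

Lemma normalize (a : carrier F) : exists a' u v : carrier F,
  norm (proj1_sig a') /\ a' = op F a u /\ a = op F a' v.
Proof.
  destruct a as [w Hw]. destruct (normalize_w w Hw) as [w' [u [v [R1 [R2 [R3 [N [E1 E2]]]]]]]].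
  exists (exist _ w' R1), (exist _ u R2), (exist _ v R3). repeat split; auto.
  - apply fp_eq; simpl; auto.
  - apply fp_eq; simpl; auto.
Qed.

Definition tlF j (s : carrier F) : carrier F :=
  exist _ (tl j (proj1_sig s)) (tl_reduced j _ (proj2_sig s)).

Lemma split_F j (s : carrier F) : op F (iota j (hd j (proj1_sig s))) (tlF j s) = s.
Proof. apply fp_eq. simpl. apply split_iota. apply (proj2_sig s). Qed.

Lemma val_op (a b : carrier F) : proj1_sig (op F a b) = word_mul (proj1_sig a) (proj1_sig b).
Proof. reflexivity. Qed.

Lemma mul_iota_norm (c : carrier F) p j z u :
  proj1_sig c = p ++ [lt j z] -> (forall u, op (M j) z u <> one (M j)) ->
  proj1_sig (op F c (iota j u)) = p ++ [lt j (op (M j) z u)].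
Proof.
  intros Hc Hz. rewrite val_op, Hc. rewrite mul_norm; auto.
  - simpl. destruct (hd_tl_iota j u [] I) as [E1 E2].
    rewrite app_nil_r in E1, E2. rewrite E1, E2. reflexivity.
  - rewrite <- Hc. apply (proj2_sig c).
  - apply iota_w_reduced.
Qed.

Lemma norm_eq_inv (c : carrier F) p j z s t :
  proj1_sig c = p ++ [lt j z] -> (forall u, op (M j) z u <> one (M j)) ->
  op F c s = op F c t ->
  op (M j) z (hd j (proj1_sig s)) = op (M j) z (hd j (proj1_sig t)) /\ tlF j s = tlF j t.
Proof.
  intros Hc Hz E. apply (f_equal (@proj1_sig _ _)) in E. rewrite !val_op, Hc in E.
  rewrite !mul_norm in E; auto; try (rewrite <- Hc; apply (proj2_sig c));
    try apply (proj2_sig s); try apply (proj2_sig t).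
  apply app_inv_head in E. injection E as E1 E2.
  apply inj_pair2 in E1. split; auto. apply fp_eq. simpl. auto.
Qed.

Lemma iota_transport j (k0 : Fin.t 2) :
  forall x t, (fun y : free_act (raw (M j)) 2 => ((k0, iota j (snd y)) : free_act (raw F) 2))
                (free_act_mul x t) =
              free_act_mul ((fun y : free_act (raw (M j)) 2 => ((k0, iota j (snd y)) : free_act (raw F) 2)) x) (iota j t).
Proof. intros [k s] t. unfold free_act_mul; simpl. rewrite iota_mul. reflexivity. Qed.


Lemma ra (HM : forall j (z y : carrier (M j)), K2 (M j) z y) (a b : carrier F) (k0 : Fin.t 2) : norm (proj1_sig (sel F a b k0)) ->
  exists G : list (free_act (raw F) 2 * free_act (raw F) 2),
    (forall q, In q G -> pv a b (fst q) = pv a b (snd q)) /\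
    (forall s t, op F (sel F a b k0) s = op F (sel F a b k0) t -> gen_congruence G (k0, s) (k0, t)).
Proof.
  set (c := sel F a b k0). intros [Hc|[p [j [z [Hc Hz]]]]].
  - exists []. split; [intros q []|].
    assert (c = one F) by (apply fp_eq; exact Hc).
    intros s t E. rewrite H, !op_one_l in E. subst. apply gen_refl.
  - destruct (HM j z z) as [Hj HHj].
    exists (map (fun q => ((k0, iota j (snd (fst q))), (k0, iota j (snd (snd q))))) Hj).
    split.
    + intros q Hq. apply in_map_iff in Hq. destruct Hq as [[[k u] [l v]] [Eq Hq]]. subst q.
      simpl. unfold pv; simpl. fold c. apply fp_eq.
      change (proj1_sig (op F c (iota j u)) = proj1_sig (op F c (iota j v))).
      rewrite !(@mul_iota_norm c p j z _ Hc Hz).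
      assert (E : pv z z (k, u) = pv z z (l, v)) by (apply HHj; apply gen_in; auto).
      unfold pv in E; simpl in E. rewrite !sel_same in E. rewrite E. reflexivity.
    + intros s t E. destruct (@norm_eq_inv c p j z s t Hc Hz E) as [E1 E2].
      rewrite <- (split_F j s), <- (split_F j t), <- E2.
      change (@gen_congruence (raw F) 2 (map (fun q => ((k0, iota j (snd (fst q))), (k0, iota j (snd (snd q))))) Hj)
        (free_act_mul ((k0, iota j (hd j (proj1_sig s))) : free_act (raw F) 2) (tlF j s))
        (free_act_mul ((k0, iota j (hd j (proj1_sig t))) : free_act (raw F) 2) (tlF j s))).
      apply gen_mul.
      assert (G0 : gen_congruence Hj (Fin.F1, hd j (proj1_sig s)) (Fin.F1, hd j (proj1_sig t))).
      { apply HHj. unfold pv; simpl. exact E1. }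
      apply (@gen_transport (raw (M j)) (raw F) 2 2 (fun y : free_act (raw (M j)) 2 => ((k0, iota j (snd y)) : free_act (raw F) 2)) (iota j) Hj (map (fun q => ((k0, iota j (snd (fst q))), (k0, iota j (snd (snd q))))) Hj)) in G0.
      * exact G0.
      * apply iota_transport.
      * intros q Hq. apply gen_in. apply in_map_iff. exists q; auto.
Qed.


Lemma norm_eq_inv2 (c d : carrier F) p j z y s t :
  proj1_sig c = p ++ [lt j z] -> (forall u, op (M j) z u <> one (M j)) ->
  proj1_sig d = p ++ [lt j y] -> (forall u, op (M j) y u <> one (M j)) ->
  op F c s = op F d t ->
  op (M j) z (hd j (proj1_sig s)) = op (M j) y (hd j (proj1_sig t)) /\ tlF j s = tlF j t.
Proof.
  intros Hc Hz Hd Hy E. apply (f_equal (@proj1_sig _ _)) in E. rewrite !val_op, Hc, Hd in E.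
  rewrite !mul_norm in E; auto; try (rewrite <- Hc; apply (proj2_sig c));
    try (rewrite <- Hd; apply (proj2_sig d));
    try apply (proj2_sig s); try apply (proj2_sig t).
  apply app_inv_head in E. injection E as E1 E2.
  apply inj_pair2 in E1. split; auto. apply fp_eq. simpl. auto.
Qed.

Lemma prefix_ideal (a b : carrier F) p i z m r :
  proj1_sig a = p ++ [lt i z] -> (forall u, op (M i) z u <> one (M i)) ->
  proj1_sig b = p ++ lt i (op (M i) z m) :: r -> exists w, b = op F a w.
Proof.
  intros Ha Hz Hb.
  assert (Rb : reduced (p ++ lt i (op (M i) z m) :: r)) by (rewrite <- Hb; apply (proj2_sig b)).
  destruct (reduced_app _ _ Rb) as [_ R2].
  apply reduced_cons_inv in R2. destruct R2 as [_ [Rr Hh]].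
  assert (Sr : starts_not i r) by (destruct r as [|y r']; simpl; auto).
  exists (exist _ (iota_w i m ++ r) (reduced_iota_app i m r Sr Rr)).
  apply fp_eq. rewrite val_op, Ha. rewrite mul_norm; auto.
  - simpl. destruct (hd_tl_iota i m r Sr) as [E1 E2]. rewrite E1, E2. auto.
  - rewrite <- Ha; apply (proj2_sig a).
  - apply reduced_iota_app; auto.
Qed.

Lemma idx_transport j :
  forall x t, (fun y : free_act (raw (M j)) 2 => ((fst y, iota j (snd y)) : free_act (raw F) 2))
                (free_act_mul x t) =
              free_act_mul ((fun y : free_act (raw (M j)) 2 => ((fst y, iota j (snd y)) : free_act (raw F) 2)) x) (iota j t).
Proof. intros [k s] t. unfold free_act_mul; simpl. rewrite iota_mul. reflexivity. Qed.

Lemma K2_norm (HM : forall j (z y : carrier (M j)), K2 (M j) z y) (a b : carrier F) :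
  norm (proj1_sig a) -> norm (proj1_sig b) -> K2 F a b.
Proof.
  intros Na Nb.
  destruct (ra HM a b Fin.F1 Na) as [Ga [Sa Ca]].
  destruct (ra HM a b (Fin.FS Fin.F1) Nb) as [Gb [Sb Cb]].
  simpl in Ca, Cb.
  destruct (classic (exists w, b = op F a w)) as [[w Hw]|Hnb].
  { apply (@K2_of_parts F a b (Ga ++ Gb ++ [((Fin.F1, w), (Fin.FS Fin.F1, one F))])).
    - intros s t E. apply gen_app_l; apply Ca; exact E.
    - intros s t E. apply gen_app_r, gen_app_l; apply Cb; exact E.
    - intros s t E.
      assert (E' : op F a s = op F a (op F w t)) by (rewrite op_assoc, <- Hw; exact E).
      eapply gen_trans.
      + apply gen_app_l; apply Ca; exact E'.
      + change (@gen_congruence (raw F) 2 (Ga ++ Gb ++ [((Fin.F1, w), (Fin.FS Fin.F1, one F))])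
          (free_act_mul ((Fin.F1, w) : free_act (raw F) 2) t) (Fin.FS Fin.F1, t)).
        rewrite <- (op_one_l F t) at 2.
        change (@gen_congruence (raw F) 2 (Ga ++ Gb ++ [((Fin.F1, w), (Fin.FS Fin.F1, one F))])
          (free_act_mul ((Fin.F1, w) : free_act (raw F) 2) t) (free_act_mul ((Fin.FS Fin.F1, one F) : free_act (raw F) 2) t)).
        apply gen_mul. apply gen_in. apply in_or_app; right; apply in_or_app; right; left; auto.
    - intros q Hq. apply in_app_or in Hq. destruct Hq as [Hq|Hq]; auto.
      apply in_app_or in Hq. destruct Hq as [Hq|[Hq|[]]]; auto. subst q.
      unfold pv; simpl. change (op F a w = op F b (one F)). rewrite <- Hw, (op_one_r F). reflexivity. }
  destruct (classic (exists w, a = op F b w)) as [[w Hw]|Hna].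
  { apply (@K2_of_parts F a b (Ga ++ Gb ++ [((Fin.FS Fin.F1, w), (Fin.F1, one F))])).
    - intros s t E. apply gen_app_l; apply Ca; exact E.
    - intros s t E. apply gen_app_r, gen_app_l; apply Cb; exact E.
    - intros s t E.
      assert (E' : op F b t = op F b (op F w s)) by (rewrite op_assoc, <- Hw; symmetry; exact E).
      apply gen_sym.
      eapply gen_trans.
      + apply gen_app_r, gen_app_l; apply Cb; exact E'.
      + change (@gen_congruence (raw F) 2 (Ga ++ Gb ++ [((Fin.FS Fin.F1, w), (Fin.F1, one F))])
          (free_act_mul ((Fin.FS Fin.F1, w) : free_act (raw F) 2) s) (Fin.F1, s)).
        rewrite <- (op_one_l F s) at 2.
        change (@gen_congruence (raw F) 2 (Ga ++ Gb ++ [((Fin.FS Fin.F1, w), (Fin.F1, one F))])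
          (free_act_mul ((Fin.FS Fin.F1, w) : free_act (raw F) 2) s) (free_act_mul ((Fin.F1, one F) : free_act (raw F) 2) s)).
        apply gen_mul. apply gen_in. apply in_or_app; right; apply in_or_app; right; left; auto.
    - intros q Hq. apply in_app_or in Hq. destruct Hq as [Hq|Hq]; auto.
      apply in_app_or in Hq. destruct Hq as [Hq|[Hq|[]]]; auto. subst q.
      unfold pv; simpl. change (op F b w = op F a (one F)). rewrite <- Hw, (op_one_r F). reflexivity. }
  destruct Na as [Ha|[p [i [z [Ha Hz]]]]].
  { exfalso. apply Hnb. exists b. assert (a = one F) by (apply fp_eq; exact Ha).
    subst a. symmetry; apply op_one_l. }
  destruct Nb as [Hb|[q [j [y [Hb Hy]]]]].
  { exfalso. apply Hna. exists a. assert (b = one F) by (apply fp_eq; exact Hb).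
    subst b. symmetry; apply op_one_l. }
  destruct (classic (p = q /\ i = j)) as [[Epq Eij]|Hpq].
  - subst q i. destruct (HM j z y) as [Hz' HHz].
    set (C := map (fun q => ((fst (fst q), iota j (snd (fst q))), (fst (snd q), iota j (snd (snd q))))) Hz').
    assert (Key : forall (k : Fin.t 2) u, proj1_sig (op F (sel F a b k) (iota j u)) =
                   p ++ [lt j (op (M j) (sel (M j) z y k) u)]).
    { intros k u. destruct (fin2_cases k) as [-> | ->]; simpl.
      - apply (@mul_iota_norm a p j z u Ha Hz).
      - apply (@mul_iota_norm b p j y u Hb Hy). }
    apply (@K2_of_parts F a b (Ga ++ Gb ++ C)).
    + intros s t E. apply gen_app_l; apply Ca; exact E.
    + intros s t E. apply gen_app_r, gen_app_l; apply Cb; exact E.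
    + intros s t E.
      destruct (@norm_eq_inv2 a b p j z y s t Ha Hz Hb Hy E) as [E1 E2].
      rewrite <- (split_F j s), <- (split_F j t), <- E2.
      change (@gen_congruence (raw F) 2 (Ga ++ Gb ++ C)
        (free_act_mul ((Fin.F1, iota j (hd j (proj1_sig s))) : free_act (raw F) 2) (tlF j s))
        (free_act_mul ((Fin.FS Fin.F1, iota j (hd j (proj1_sig t))) : free_act (raw F) 2) (tlF j s))).
      apply gen_mul.
      assert (G0 : gen_congruence Hz' (Fin.F1, hd j (proj1_sig s)) (Fin.FS Fin.F1, hd j (proj1_sig t))).
      { apply HHz. unfold pv; simpl. exact E1. }
      apply (@gen_transport (raw (M j)) (raw F) 2 2
        (fun y : free_act (raw (M j)) 2 => ((fst y, iota j (snd y)) : free_act (raw F) 2))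
        (iota j) Hz' (Ga ++ Gb ++ C)) in G0.
      * exact G0.
      * apply idx_transport.
      * intros q Hq. apply gen_in. apply in_or_app; right; apply in_or_app; right.
        unfold C. apply in_map_iff. exists q; auto.
    + intros q Hq. apply in_app_or in Hq. destruct Hq as [Hq|Hq]; auto.
      apply in_app_or in Hq. destruct Hq as [Hq|Hq]; auto.
      unfold C in Hq. apply in_map_iff in Hq. destruct Hq as [[[k u] [l v]] [Eq Hq]]. subst q.
      simpl. unfold pv; simpl. apply fp_eq. change (proj1_sig (op F (sel F a b k) (iota j u)) = proj1_sig (op F (sel F a b l) (iota j v))). rewrite !Key.
      assert (E : pv z y (k, u) = pv z y (l, v)) by (apply HHz; apply gen_in; auto).
      unfold pv in E; simpl in E. change (op (M j) (sel (M j) z y k) u = op (M j) (sel (M j) z y l) v) in E. rewrite E. reflexivity.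
  - apply (@K2_of_parts F a b (Ga ++ Gb)).
    + intros s t E. apply gen_app_l; apply Ca; exact E.
    + intros s t E. apply gen_app_r; apply Cb; exact E.
    + intros s t E. exfalso.
      apply (f_equal (@proj1_sig _ _)) in E. rewrite !val_op, Ha, Hb in E.
      rewrite !mul_norm in E; auto; try (rewrite <- Ha; apply (proj2_sig a));
        try (rewrite <- Hb; apply (proj2_sig b));
        try apply (proj2_sig s); try apply (proj2_sig t).
      destruct (app_cons_cases _ _ _ _ _ _ E) as [[E1 [E2 _]]|[[r Er]|[r Er]]].
      * apply Hpq. split; auto. apply (f_equal (@projT1 _ _)) in E2. exact E2.
      * apply Hnb. apply (@prefix_ideal a b p i z (hd i (proj1_sig s)) (r ++ [lt j y]) Ha Hz).
        rewrite Hb, Er. rewrite <- app_assoc. reflexivity.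
      * apply Hna. apply (@prefix_ideal b a q j y (hd j (proj1_sig t)) (r ++ [lt i z]) Hb Hy).
        rewrite Ha, Er. rewrite <- app_assoc. reflexivity.
    + intros q0 Hq. apply in_app_or in Hq. destruct Hq as [Hq|Hq]; auto.
Qed.

Lemma K2_all (HM : forall j (z y : carrier (M j)), K2 (M j) z y) (a b : carrier F) : K2 F a b.
Proof.
  destruct (normalize a) as [a' [u [v [Na [E1 E2]]]]].
  destruct (normalize b) as [b' [u' [v' [Nb [E3 E4]]]]].
  apply (K2_equiv u v u' v' E1 E2 E3 E4). apply K2_norm; auto.
Qed.

Lemma K2_proj i (a b : carrier (M i)) : K2 F (iota i a) (iota i b) -> K2 (M i) a b.
Proof.
  intros [H HH].
  set (pr := fun x : free_act (raw F) 2 => ((fst x, proj i (proj1_sig (snd x))) : free_act (raw (M i)) 2)).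
  exists (map (fun q => (pr (fst q), pr (snd q))) H).
  assert (Sel : forall k : Fin.t 2, sel F (iota i a) (iota i b) k = iota i (sel (M i) a b k)).
  { intros k. destruct (fin2_cases k) as [-> | ->]; reflexivity. }
  intros x y. split.
  - intros E.
    assert (G : gen_congruence H ((fst x, iota i (snd x)) : free_act (raw F) 2) ((fst y, iota i (snd y)) : free_act (raw F) 2)).
    { apply HH. unfold pv; simpl. rewrite !Sel, <- !iota_mul. f_equal. exact E. }
    apply (@gen_transport (raw F) (raw (M i)) 2 2 pr (fun f => proj i (proj1_sig f)) H (map (fun q => (pr (fst q), pr (snd q))) H)) in G.
    + unfold pr in G; simpl in G. rewrite !proj_iota in G. destruct x, y; exact G.
    + intros [k f] t. unfold pr, free_act_mul; simpl. rewrite proj_mul. reflexivity.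
    + intros q Hq. apply gen_in. apply in_map_iff. exists q; auto.
  - intros G. refine (gen_min (rho := fun x y => pv a b x = pv a b y) _ _ G).
    + apply ker_rc. apply pv_act.
    + intros q Hq. apply in_map_iff in Hq. destruct Hq as [q0 [Eq Hq]]. subst q. simpl.
      assert (E : @pv F (iota i a) (iota i b) (fst q0) = @pv F (iota i a) (iota i b) (snd q0))
        by (apply HH; destruct q0; apply gen_in; auto).
      apply (f_equal (fun f => proj i (proj1_sig f))) in E.
      destruct q0 as [[k f] [l g]]. unfold pv in E |- *; simpl in E |- *.
      rewrite !Sel in E. simpl in E. rewrite !proj_mul, !proj_iota in E. exact E.
Qed.

End FP.

Theorem mainTheorem2 (I : Type) (M : I -> Monoid) :
  weakly_right_coherent (free_product M) <->
  (forall i : I, weakly_right_coherent (raw (M i))).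
Proof.
  change (free_product M) with (raw (Fmon M)). rewrite wrc_iff_K2. split.
  - intros HF i. apply wrc_iff_K2. intros a b. apply K2_proj. apply HF.
  - intros HM a b. apply K2_all. intros j z y. apply wrc_iff_K2. apply HM.
Qed.
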